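(* If $\mathbf c_1,\mathbf c_2\in\mathrm{GF}(q^m)^n$ and $d_{\mathrm R}(\mathbf c_1,\mathbf c_2)=r$, then for $0\le s\le r$, $$|B_s(\mathbf c_1)\cap B_{r-s}(\mathbf c_2)|=q^{s(r-s)}{r\brack s}.$$
   Context: The rank $\mathrm{rk}(\mathbf x)$ of $\mathbf x\in\mathrm{GF}(q^m)^n$ is the maximum number of its coordinates linearly independent over $\mathrm{GF}(q)$, and $d_{\mathrm R}(\mathbf x,\mathbf y)=\mathrm{rk}(\mathbf x-\mathbf y)$. $B_r(\mathbf x)$ is the set of vectors within rank distance $r$ of $\mathbf x$. ${r\brack s}$ is the Gaussian binomial coefficient, the number of $s$-dimensional subspaces of $\mathrm{GF}(q)^r$. *)

(* Defs.v *)
From HB Require Import structures.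
From mathcomp Require Import all_boot all_order all_algebra all_field.
Set Implicit Arguments. Unset Strict Implicit. Unset Printing Implicit Defensive.
Import GRing.Theory.
Local Open Scope ring_scope.

(* Setting: F = GF(q) is a finite field, L = GF(q^m) a finite-dimensional
   field extension of F.  [finvect_type L] is L with its canonical finType
   structure (so that vectors can be counted). *)

Definition fvec (F : finFieldType) (L : fieldExtType F) (n : nat) :=
  {ffun 'I_n -> finvect_type L}.

Definition rk (F : finFieldType) (L : fieldExtType F) (n : nat)
  (x : fvec L n) : nat := \dim <<codom x>>%VS.

Definition dR (F : finFieldType) (L : fieldExtType F) (n : nat)
  (x y : fvec L n) : nat := rk (x - y).

Definition ball (F : finFieldType) (L : fieldExtType F) (n : nat)
  (r : nat) (x : fvec L n) : {set fvec L n} :=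
  [set y | (dR x y <= r)%N].

Fixpoint gbinom (q r s : nat) {struct r} : nat :=
  match r, s with
  | 0, 0 => 1
  | 0, _.+1 => 0
  | _.+1, 0 => 1
  | r'.+1, s'.+1 => gbinom q r' s' + q ^ s'.+1 * gbinom q r' s'.+1
  end%N.

(* Main.v *)
Require Import Defs.
From HB Require Import structures.
From mathcomp Require Import all_boot all_order all_algebra all_field.
From mathcomp Require Import zify.
Set Implicit Arguments. Unset Strict Implicit. Unset Printing Implicit Defensive.
Import GRing.Theory.

Definition fq (q d k : nat) := (\prod_(i < k) (q ^ d - q ^ i))%N.

Lemma fq_zero q d k : (d < k)%N -> fq q d k = 0%N.
Proof.
by move=> dk; rewrite /fq (bigD1 (Ordinal dk)) //= subnn mul0n.
Qed.

Lemma gbinom_zero q r s : (r < s)%N -> gbinom q r s = 0%N.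
Proof.
elim: r s => [|r IH] [|s] //= H.
by rewrite !IH ?muln0 // ltnW.
Qed.

Lemma fqS q d k : fq q d.+1 k.+1 = ((q ^ d.+1 - 1) * q ^ k * fq q d k)%N.
Proof.
rewrite /fq big_ord_recl /= expn0 -mulnA; congr (_ * _)%N.
have ->: (q ^ k = \prod_(i < k) q)%N by rewrite prod_nat_const card_ord.
rewrite -big_split /=.
by apply: eq_bigr => i _; rewrite /bump /= add1n !expnS mulnBr.
Qed.

Lemma gbinom_fq q r s : (0 < q)%N -> (gbinom q r s * fq q s s)%N = fq q r s.
Proof.
move=> q0.
elim: r s => [|r IH] s.
  case: s => [|s]; first by rewrite /fq big_ord0.
  by rewrite /= mul0n fq_zero.
case: s => [|s]; first by rewrite /fq !big_ord0 mul1n.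
rewrite /= mulnDl.
have e1: (gbinom q r s * fq q s.+1 s.+1 = (q ^ s.+1 - 1) * q ^ s * fq q r s)%N.
  by rewrite fqS mulnCA IH.
have e2: (q ^ s.+1 * gbinom q r s.+1 * fq q s.+1 s.+1 = q ^ s.+1 * fq q r s.+1)%N.
  by rewrite -mulnA IH.
rewrite e1 e2 {2}/fq big_ord_recr /= -/(fq q r s) fqS.
have [sr|rs] := leqP s r; last first.
  by rewrite fq_zero // !muln0.
have K: (q ^ s.+1 * (q ^ r - q ^ s) = (q ^ r.+1 - q ^ s.+1) * q ^ s)%N.
  by rewrite !expnS mulnBr mulnBl -!mulnA (mulnC (q ^ r)).
rewrite mulnCA K [fq q r s * _]mulnC -mulnDl -mulnDl; congr (_ * _ * _)%N.
have h1: (1 <= q ^ s.+1)%N by rewrite expn_gt0 q0.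
have h2: (q ^ s.+1 <= q ^ r.+1)%N by rewrite leq_pexp2l.
lia.
Qed.


Lemma prod_shift q s t :
  (\prod_(i < t) (q ^ (s + t) - q ^ (s + i)) = q ^ (s * t) * fq q t t)%N.
Proof.
have ->: (q ^ (s * t) = \prod_(i < t) q ^ s)%N by rewrite prod_nat_const card_ord expnM.
rewrite /fq -big_split /=.
by apply: eq_bigr => i _; rewrite !expnD mulnBr.
Qed.

Lemma fq_gt0 q d : (1 < q)%N -> (0 < fq q d d)%N.
Proof.
move=> q1; rewrite /fq prodn_gt0 // => i.
by rewrite subn_gt0 ltn_exp2l.
Qed.

Local Open Scope ring_scope.

Lemma card_pair (X Y : finType) (P : X -> Y -> bool) :
  #|[set b : X * Y | P b.1 b.2]| = (\sum_x #|[set y | P x y]|)%N.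
Proof.
rewrite -sum1_card.
rewrite (eq_bigl (fun b : X * Y => predT b.1 && P b.1 b.2)); last by move=> b; rewrite inE.
rewrite -(pair_big_dep predT P (fun _ _ => 1%N)) /=.
by apply: eq_bigr => x _; rewrite -sum1_card; apply: eq_bigl => y; rewrite inE.
Qed.

Section Count.
Variables (F : finFieldType) (vT : vectType F).
Local Notation T := (finvect_type vT).
Local Notation q := #|F|.

Lemma count_free (V : {vspace T}) k : forall p : seq T, free p -> all (fun x => x \in V) p ->
  #|[set t : k.-tuple T | free (p ++ t) && all (fun x => x \in V) t]| =
  (\prod_(i < k) (q ^ \dim V - q ^ (size p + i)))%N.
Proof.
elim: k => [|k IH] p fp pV.
  rewrite big_ord0.
  rewrite (_ : [set t : 0.-tuple T | _] = setT); first by rewrite cardsT card_tuple.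
  by apply/setP => t; rewrite !inE tuple0 /= cats0 fp.
pose P (t : seq T) := free (p ++ t) && all (fun x => x \in V) t.
have ->: #|[set t : k.+1.-tuple T | P t]| = #|[set xt : T * k.-tuple T | P (xt.1 :: xt.2)]|.
  rewrite -(card_imset _ (f := fun xt : T * k.-tuple T => cons_tuple xt.1 xt.2)); last first.
    by move=> [x t] [x' t'] /= /(congr1 val) /= [-> /val_inj ->].
  apply: eq_card => t; rewrite inE; apply/idP/imsetP.
    case/tupleP: t => x t' Pt; exists (x, t') => //.
    by rewrite inE.
  by move=> [[x t'] /=]; rewrite inE /= => Pt ->.
rewrite (card_pair (fun x (t : k.-tuple T) => P (x :: t))).
have pV' : (<<p>> <= V)%VS by apply/span_subvP => x /(allP pV).
have dp : \dim <<p>> = size p by apply/eqP.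
rewrite (eq_bigr (fun x => if (x \in V) && (x \notin <<p>>%VS) then
   \prod_(i < k) (q ^ \dim V - q ^ (size p + i.+1)) else 0))%N; last first.
  move=> x _.
  case: ifP => [/andP[xV xp] | bad].
    have fpx : free (rcons p x).
      have pe : perm_eq (rcons p x) (x :: p) by rewrite perm_rcons.
      by rewrite (perm_free pe) free_cons xp fp.
    have pxV : all (fun x => x \in V) (rcons p x) by rewrite all_rcons xV pV.
    rewrite (eq_bigr (fun i : 'I_k => q ^ \dim V - q ^ (size (rcons p x) + i)))%N; last first.
      by move=> i _; rewrite size_rcons addSnnS.
    rewrite -(IH _ fpx pxV).
    by apply: eq_card => t; rewrite !inE /P /= xV cat_rcons.
  apply/eqP; rewrite cards_eq0; apply/eqP/setP => t; rewrite !inE /P.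
  apply/negbTE/andP => [[fr /= /andP[xV _]]].
  move: fr; rewrite -cat_rcons => /catl_free.
  have pe : perm_eq (rcons p x) (x :: p) by rewrite perm_rcons.
  by rewrite (perm_free pe) free_cons => /andP[xp _]; rewrite xV xp in bad.
rewrite -big_mkcond sum_nat_const big_ord_recl /= addn0.
congr (_ * _)%N.
rewrite -(card_vspace V) -dp -(card_vspace <<p>>%VS).
have := cardID (mem <<p>>%VS) (mem V).
have -> : #|[predI mem V & mem <<p>>%VS]| = #|<<p>>%VS|.
  apply: eq_card => x; rewrite !inE.
  by case: (boolP (x \in <<p>>%VS)) => h; rewrite ?andbT ?andbF // (subvP pV' _ h).
move=> <-; rewrite addKn; apply: eq_card => x; by rewrite !inE andbC.
Qed.

Lemma codom_mem n (x : {ffun 'I_n -> T}) i : x i \in <<codom x>>%VS.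
Proof. exact: memv_span (codom_f x i). Qed.

Section Main.
Variables (n : nat) (e : {ffun 'I_n -> T}) (s : nat).
Let V := <<codom e>>%VS.
Let r := \dim V.
Hypothesis hs : (s <= r)%N.
Definition rkf (x : {ffun 'I_n -> T}) := \dim <<codom x>>%VS.
Let S := [set u : {ffun 'I_n -> T} | (rkf u <= s)%N && (rkf (e - u)%R <= r - s)%N].

Lemma K1 u : u \in S ->
  [/\ (<<codom u>> + <<codom (e - u)>> = V)%VS,
      (<<codom u>> :&: <<codom (e - u)>> = 0)%VS,
      \dim <<codom u>> = s & \dim <<codom (e - u)>> = (r - s)%N].
Proof.
rewrite inE /rkf => /andP[hu hw].
set U := <<codom u>>%VS; set W := <<codom (e - u)>>%VS.
have hs0 : (s <= \dim V)%N := hs.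
rewrite /r in hw *.
have {hu}hu : (\dim U <= s)%N := hu.
have {hw}hw : (\dim W <= \dim V - s)%N := hw.
have VUW : (V <= U + W)%VS.
  apply/span_subvP => y /codomP [i ->].
  have -> : e i = u i + (e - u) i by rewrite !ffunE addrC subrK.
  by apply: memv_add; apply: codom_mem.
have d1 := dimvS VUW.
have [d2 d2e] := dimv_add_leqif U W.
have dU : \dim U = s by lia.
have dW : \dim W = (\dim V - s)%N by lia.
have dUW : \dim (U + W) = (\dim U + \dim W)%N by lia.
have cap0 : (U :&: W = 0)%VS by apply/eqP; rewrite -subv0 -d2e dUW eqxx.
split => //.
apply/eqP; rewrite eq_sym eqEdim VUW /= dUW dU dW; lia.
Qed.

Lemma K2 (b1 : s.-tuple T) (b2 : (r - s).-tuple T) :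
  free (b1 ++ b2) -> all (fun x => x \in V) (b1 ++ b2) ->
  [/\ (<<b1>> + <<b2>> = V)%VS, (<<b1>> :&: <<b2>> = 0)%VS,
      \dim <<b1>> = s & \dim <<b2>> = (r - s)%N].
Proof.
move=> fb bV; have := fb; rewrite cat_free => /and3P[f1 f2 dir].
have d1 : \dim <<b1>> = s by rewrite (eqP f1) size_tuple.
have d2 : \dim <<b2>> = (r - s)%N by rewrite (eqP f2) size_tuple.
split => //; last by apply/directv_addP.
apply/eqP; rewrite -span_cat eqEdim; apply/andP; split.
  by apply/span_subvP => x /(allP bV).
by rewrite (eqP fb) size_cat !size_tuple subnKC.
Qed.

Definition proj (U W : {vspace T}) : {ffun 'I_n -> T} := [ffun i => daddv_pi U W (e i)].

Lemma proj_ok U W : (U + W = V)%VS -> (U :&: W = 0)%VS -> \dim U = s -> \dim W = (r - s)%N ->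
  [/\ proj U W \in S, <<codom (proj U W)>>%VS = U & <<codom (e - proj U W)>>%VS = W].
Proof.
move=> UWV cap dU dW.
have eW : forall i, (e - proj U W) i = daddv_pi W U (e i).
  move=> i; rewrite !ffunE; apply/eqP; rewrite subr_eq addrC daddv_pi_add //.
  by rewrite UWV codom_mem.
have sU : (<<codom (proj U W)>> <= U)%VS.
  by apply/span_subvP => y /codomP [i ->]; rewrite ffunE memv_pi.
have sW : (<<codom (e - proj U W)>> <= W)%VS.
  by apply/span_subvP => y /codomP [i ->]; rewrite eW memv_pi.
have inS : proj U W \in S.
  by rewrite inE /rkf; apply/andP; split; [rewrite -dU | rewrite -dW]; apply: dimvS.
have [_ _ d1 d2] := K1 inS.
split => //; apply/eqP; rewrite eqEdim ?sU ?sW /= ?d1 ?d2 ?dU ?dW //.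
Qed.

Lemma K3 u u' : u \in S -> u' \in S -> <<codom u>>%VS = <<codom u'>>%VS ->
  <<codom (e - u)>>%VS = <<codom (e - u')>>%VS -> u = u'.
Proof.
move=> uS u'S eU eW; have [_ cap _ _] := K1 uS.
apply/ffunP => i; apply/eqP; rewrite -subr_eq0 -memv0 -cap memv_cap.
apply/andP; split.
  apply: memvB; first exact: codom_mem.
  by rewrite eU codom_mem.
have -> : u i - u' i = (e - u') i - (e - u) i.
  by rewrite !ffunE [RHS]addrC opprB addrA subrK.
apply: memvB; last exact: codom_mem.
by rewrite eW codom_mem.
Qed.


Let BB := [set b : s.-tuple T * (r - s).-tuple T |
  free (b.1 ++ b.2) && all (fun x => x \in V) (b.1 ++ b.2)].

Lemma card_BB1 : #|BB| = (fq q r s * \prod_(i < r - s) (q ^ r - q ^ (s + i)))%N.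
Proof.
rewrite (card_pair (fun (b1 : s.-tuple T) (b2 : (r - s).-tuple T) =>
   free (b1 ++ b2) && all (fun x => x \in V) (b1 ++ b2))).
rewrite (eq_bigr (fun b1 : s.-tuple T => if free b1 && all (fun x => x \in V) b1
   then \prod_(i < r - s) (q ^ r - q ^ (s + i)) else 0))%N; last first.
  move=> b1 _; case: ifP => [/andP[f1 a1] | bad].
    transitivity #|[set t : (r - s).-tuple T | free (b1 ++ t) && all (fun x => x \in V) t]|.
      by apply: eq_card => b2; rewrite !inE all_cat a1.
    by rewrite (count_free _ f1 a1) size_tuple.
  apply/eqP; rewrite cards_eq0; apply/eqP/setP => b2; rewrite !inE all_cat.
  by apply/negbTE/andP => [[/catl_free f1 /andP[a1 _]]]; rewrite f1 a1 in bad.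
rewrite -big_mkcond sum_nat_const; congr (_ * _)%N.
have := count_free s (p := [::]) (nil_free _) isT.
rewrite /fq => <-; by apply: eq_card => b1; rewrite !inE.
Qed.

Lemma card_BB2 : #|BB| = (#|S| * (fq q s s * fq q (r - s) (r - s)))%N.
Proof.
rewrite -sum1_card (partition_big (fun b : s.-tuple T * (r - s).-tuple T =>
   proj <<b.1>>%VS <<b.2>>%VS) (mem S)) /=; last first.
  move=> [b1 b2]; rewrite inE /= => /andP[fb ab].
  have [h1 h2 h3 h4] := K2 fb ab.
  by have [] := proj_ok h1 h2 h3 h4.
rewrite -sum_nat_const; apply: eq_bigr => u uS.
rewrite sum1_card.
have [UWV cap dU dW] := K1 uS.
set U := <<codom u>>%VS in UWV cap dU *; set W := <<codom (e - u)>>%VS in UWV cap dW *.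
have c1 := count_free s (V := U) (p := [::]) (nil_free _) isT.
have c2 := count_free (r - s) (V := W) (p := [::]) (nil_free _) isT.
rewrite dU /= in c1; rewrite dW /= in c2.
rewrite /fq -c1 -c2 -cardsX.
apply: eq_card => -[b1 b2]; rewrite unfold_in /= !inE /=.
apply/idP/idP.
  move=> /andP[/andP[fb ab] /eqP pu].
  have [h1 h2 h3 h4] := K2 fb ab.
  have [pS eU eW] := proj_ok h1 h2 h3 h4.
  rewrite pu in eU eW.
  rewrite /U /W eU eW (catl_free fb) (catr_free fb) /=.
  by apply/andP; split; apply/allP => x; apply: memv_span.
move=> /and3P[/andP[f1 a1] f2 a2].
have e1 : <<b1>>%VS = U.
  apply/eqP; rewrite eqEdim (eqP f1) size_tuple dU leqnn andbT.
  by apply/span_subvP => x /(allP a1).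
have e2 : <<b2>>%VS = W.
  apply/eqP; rewrite eqEdim (eqP f2) size_tuple dW leqnn andbT.
  by apply/span_subvP => x /(allP a2).
have UV : (U <= V)%VS by rewrite -UWV addvSl.
have WV : (W <= V)%VS by rewrite -UWV addvSr.
apply/andP; split.
  rewrite cat_free f1 f2 e1 e2 /=; apply/andP; split; first by apply/directv_addP.
  rewrite all_cat; apply/andP; split; apply/allP => x xb.
    by apply: (subvP UV); apply: (allP a1).
  by apply: (subvP WV); apply: (allP a2).
rewrite e1 e2; apply/eqP.
have [pS eU eW] := proj_ok UWV cap dU dW.
by apply: K3 => //; rewrite ?eU ?eW.
Qed.

Lemma card_S : #|S| = (q ^ (s * (r - s)) * gbinom q r s)%N.
Proof.
have q1 : (1 < q)%N := finNzRing_gt1 F.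
have q0 : (0 < q)%N by apply: ltnW.
have := card_BB1; rewrite card_BB2.
have rE : r = (s + (r - s))%N by rewrite subnKC.
have P : (\prod_(i < r - s) (q ^ r - q ^ (s + i)) = q ^ (s * (r - s)) * fq q (r - s) (r - s))%N.
  by rewrite -prod_shift -rE.
rewrite P -(gbinom_fq r s q0) => h.
have X0 : (0 < fq q s s * fq q (r - s) (r - s))%N by rewrite muln_gt0 !fq_gt0.
apply/eqP; rewrite -(eqn_pmul2r X0).
rewrite h; apply/eqP.
set A := gbinom _ _ _; set B := fq _ s s; set C := (_ ^ _)%N; set D := fq _ _ (r - s).
by rewrite -!mulnA [RHS]mulnCA (mulnCA C).
Qed.
End Main.
End Count.

Lemma span_codomN (F : finFieldType) (L : fieldExtType F) n (x : fvec L n) :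
  <<codom (- x)>>%VS = <<codom x>>%VS.
Proof.
have h : forall y : fvec L n, (<<codom (- y)>> <= <<codom y>>)%VS.
  by move=> y; apply/span_subvP => z /codomP [i ->]; rewrite ffunE memvN codom_mem.
by apply/subv_anti; rewrite h /= -{1}(opprK x) h.
Qed.

Theorem proposition4 (F : finFieldType) (L : fieldExtType F) (n : nat)
  (c1 c2 : fvec L n) (r s : nat) :
  dR c1 c2 = r -> (s <= r)%N ->
  #|ball s c1 :&: ball (r - s) c2| = (#|F| ^ (s * (r - s)) * gbinom #|F| r s)%N.
Proof.
move=> <- hs.
rewrite -(card_S hs).
rewrite -(card_preimset _ (f := fun y : fvec L n => c1 - y)); last first.
  by move=> y y' /addrI /oppr_inj.
apply: eq_card => y; rewrite !inE /dR /rk /rkf.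
have -> : c1 - (c1 - y) = y by rewrite opprB addrC subrK.
have -> : c2 - (c1 - y) = - (c1 - c2 - y).
  by rewrite !opprB addrCA.
by rewrite span_codomN.
Qed.
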